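(* Let $p\in(0,1)$ and let $B\ge 1$ be an integer. For $q\in(0,1]$ define $r_B(q)$ by: if $B=1$, $r_1(q)=\frac{p}{p+q-pq}$; if $B>1$ and $q\neq p$, $$r_B(q)=\frac{\frac{p}{q}\Big(1-\big(\frac{p(1-q)}{q(1-p)}\big)^B\Big)}{1-\frac{p}{q}\big(\frac{p(1-q)}{q(1-p)}\big)^B},$$ and if $B>1$ and $q=p$, $r_B(p)=\frac{B}{B+1-p}$. Let $f_B(q)=q\,r_B(q)$ for $q\in(0,1]$ and $f_B(0)=0$. Then $f_B$ is an increasing function of $q$ on $[0,1]$.
   Context: Interpretation: $r_B(q)$ is the stationary probability that the battery (of capacity $B$ energy units) of a transmitter is nonempty, when one unit of energy arrives per slot with probability $p$ (i.i.d. Bernoulli) and, whenever the battery is nonempty, one unit is spent for a transmission with probability $q$. Then $f_B(q)$ is the probability that the transmitter transmits in a given slot. *)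

(* Defs.v *)
From HB Require Import structures.
From mathcomp Require Import all_boot all_order all_algebra.
Set Implicit Arguments. Unset Strict Implicit. Unset Printing Implicit Defensive.
Import Order.TTheory GRing.Theory Num.Theory.
Local Open Scope ring_scope.

(* r_B(q): stationary probability that the battery (capacity B) is nonempty,
   arrival probability p, transmission probability q. Only meaningful for
   q in (0,1] and B >= 1. *)
Definition rB (R : realFieldType) (p : R) (B : nat) (q : R) : R :=
  if B == 1%N then p / (p + q - p * q)
  else if q == p then B%:R / (B%:R + 1 - p)
  else let a := (p * (1 - q)) / (q * (1 - p)) in
       (p / q * (1 - a ^+ B)) / (1 - p / q * a ^+ B).

Definition fB (R : realFieldType) (p : R) (B : nat) (q : R) : R :=
  if q == 0 then 0 else q * rB p B q.

(* Main.v *)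
Require Import Defs.
From HB Require Import structures.
From mathcomp Require Import all_boot all_order all_algebra.
From mathcomp Require Import ring lra.
Import Order.TTheory GRing.Theory Num.Theory.
Local Open Scope ring_scope.

Fixpoint Gs {R : realFieldType} (a : R) (n : nat) : R :=
  match n with 0%N => 0 | n.+1 => 1 + a * Gs a n end.

Definition hh {R : realFieldType} (c : R) n t := c * Gs (c * t) n.

Lemma hhS (R : realFieldType) (c : R) n t : hh c n.+1 t = c + c * t * hh c n t.
Proof. rewrite /hh /=; ring. Qed.

Lemma hh0 (R : realFieldType) (c : R) t : hh c 0 t = 0.
Proof. by rewrite /hh /= mulr0. Qed.

Lemma Gs_ge0 (R : realFieldType) (a : R) n : 0 <= a -> 0 <= Gs a n.
Proof.
move=> ha; elim: n => [|n IH] //=.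
by apply: addr_ge0 => //; apply: mulr_ge0.
Qed.

Lemma Gs_geom (R : realFieldType) (a : R) n : (1 - a) * Gs a n = 1 - a ^+ n.
Proof.
elim: n => [|n IH] /=; first by rewrite mulr0 expr0 subrr.
rewrite exprS; have -> : (1 - a) * (1 + a * Gs a n) = 1 - a + a * ((1 - a) * Gs a n) by ring.
rewrite IH; ring.
Qed.

Lemma Gs_one (R : realFieldType) n : Gs (1 : R) n = n%:R.
Proof. elim: n => [|n IH] //=; by rewrite mul1r IH -[in RHS](addn1 n) natrD addrC. Qed.

Lemma hh_ge0 (R : realFieldType) (c : R) n t : 0 < c -> 0 <= t -> 0 <= hh c n t.
Proof.
move=> hc ht; rewrite /hh; apply: mulr_ge0; first exact: ltW.
apply: Gs_ge0; apply: mulr_ge0 => //; exact: ltW.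
Qed.

Lemma hh_gt0 (R : realFieldType) (c : R) n t : 0 < c -> 0 <= t -> 0 < hh c n.+1 t.
Proof.
move=> hc ht; rewrite hhS; have := @hh_ge0 _ c n t hc ht => h0.
have : 0 <= c * t * hh c n t by apply: mulr_ge0 => //; apply: mulr_ge0 => //; exact: ltW.
lra.
Qed.

Lemma hh_lt (R : realFieldType) (c : R) n t : 0 < c -> 0 < t -> hh c n t < hh c n.+1 t.
Proof.
move=> hc ht; elim: n => [|n IH]; first by rewrite hh0 hhS hh0; lra.
have hct : 0 < c * t by apply: mulr_gt0.
have : c * t * hh c n t < c * t * hh c n.+1 t by rewrite ltr_pM2l.
have E1 := @hhS _ c n.+1 t.
have E2 := @hhS _ c n t.
lra.
Qed.

Lemma key (R : realFieldType) (c : R) n x y : 0 < c -> 0 <= y -> y < x ->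
  hh c n x - hh c n y <= (x - y) * hh c n x * hh c n y.
Proof.
move=> hc hy hxy; have hx : 0 < x by lra.
elim: n => [|n IH]; first by rewrite !hh0; lra.
set hx' := hh c n x; set hy' := hh c n y.
have hy0 : 0 <= hy' by apply: hh_ge0.
have hx0 : 0 <= hx' by apply: hh_ge0; lra.
have hlt : hx' < c + c * x * hx' by rewrite -hhS; apply: hh_lt.
rewrite !hhS -/hx' -/hy'.
have e1 : c + c * x * hx' - (c + c * y * hy') = c * (x - y) * hx' + c * y * (hx' - hy') by ring.
have i1 : c * y * (hx' - hy') <= c * y * ((x - y) * hx' * hy').
  by apply: ler_wpM2l => //; apply: mulr_ge0 => //; exact: ltW.
have pos : 0 < c * (x - y) * (1 + y * hy').
  apply: mulr_gt0; first by apply: mulr_gt0; lra.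
  have : 0 <= y * hy' by apply: mulr_ge0.
  lra.
have i2 : c * (x - y) * (1 + y * hy') * hx' < c * (x - y) * (1 + y * hy') * (c + c * x * hx').
  by rewrite ltr_pM2l.
apply: ltW.
have e2 : (x - y) * (c + c * x * hx') * (c + c * y * hy') =
   c * (x - y) * (1 + y * hy') * (c + c * x * hx') by ring.
rewrite e1 e2.
have e3 : c * (x - y) * hx' + c * y * ((x - y) * hx' * hy') = c * (x - y) * (1 + y * hy') * hx' by ring.
lra.
Qed.

Lemma keys (R : realFieldType) (c : R) n x y : 0 < c -> 0 <= y -> y < x ->
  hh c n.+1 x - hh c n.+1 y < (x - y) * hh c n.+1 x * hh c n.+1 y.
Proof.
move=> hc hy hxy; have hx : 0 < x by lra.
have IH := @key _ c n x y hc hy hxy.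
set hx' := hh c n x; set hy' := hh c n y.
have hy0 : 0 <= hy' by apply: hh_ge0.
have hx0 : 0 <= hx' by apply: hh_ge0; lra.
have hlt : hx' < c + c * x * hx' by rewrite -hhS; apply: hh_lt.
rewrite !hhS -/hx' -/hy'.
have e1 : c + c * x * hx' - (c + c * y * hy') = c * (x - y) * hx' + c * y * (hx' - hy') by ring.
have i1 : c * y * (hx' - hy') <= c * y * ((x - y) * hx' * hy').
  by apply: ler_wpM2l => //; apply: mulr_ge0 => //; exact: ltW.
have pos : 0 < c * (x - y) * (1 + y * hy').
  apply: mulr_gt0; first by apply: mulr_gt0; lra.
  have : 0 <= y * hy' by apply: mulr_ge0.
  lra.
have i2 : c * (x - y) * (1 + y * hy') * hx' < c * (x - y) * (1 + y * hy') * (c + c * x * hx').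
  by rewrite ltr_pM2l.
have e2 : (x - y) * (c + c * x * hx') * (c + c * y * hy') =
   c * (x - y) * (1 + y * hy') * (c + c * x * hx') by ring.
rewrite e1 e2.
have e3 : c * (x - y) * hx' + c * y * ((x - y) * hx' * hy') = c * (x - y) * (1 + y * hy') * hx' by ring.
lra.
Qed.

Lemma nz (R : realFieldType) (x : R) : 0 < x -> x != 0.
Proof. by move=> h; rewrite gt_eqF. Qed.

Ltac snz := repeat (apply/andP; split); try (assumption || (apply: nz; nra)).

Lemma rB_eq (R : realFieldType) (p : R) (B : nat) (q : R) :
  0 < p -> p < 1 -> (1 <= B)%N -> 0 < q -> q <= 1 ->
  rB p B q = hh (p / (1 - p)) B ((1 - q) / q) / (q + hh (p / (1 - p)) B ((1 - q) / q)).
Proof.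
move=> p0 p1 B1 q0 q1.
set c := p / (1 - p); set t := (1 - q) / q.
have c0 : 0 < c by rewrite /c divr_gt0 // subr_gt0.
have t0 : 0 <= t by rewrite /t divr_ge0 // ?subr_ge0 // ltW.
have hp : 0 < hh c B t by case: B B1 => // n _; apply: hh_gt0.
have hq : 0 < q + hh c B t by lra.
have p1' : 1 - p != 0 by apply: nz; lra.
have q' : q != 0 by apply: nz.
have p' : p != 0 by apply: nz.
rewrite /rB; case: eqP => [EB|NB].
  subst B; rewrite hhS hh0 mulr0 addr0.
  have : 0 < p + q - p * q by nra.
  move=> H; rewrite /c; field.
  by rewrite p1' /=; apply: nz; lra.
case: eqP => [Eq|Nq].
  have ct : c * t = 1 by rewrite /c /t Eq; field; snz.
  move: hq hp; rewrite /hh ct Gs_one => hq hp.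
  have H : 0 < B%:R + 1 - p.
    have : (1 <= B%:R :> R) by rewrite ler1n.
    lra.
  rewrite Eq /c; field; snz.
set a := (p * (1 - q)) / (q * (1 - p)).
have ct : c * t = a by rewrite /c /t /a; field; snz.
move: hq hp; rewrite /hh ct => hq hp.
have GA := @Gs_geom _ a B.
have EA : a ^+ B = 1 - (1 - a) * Gs a B by rewrite GA; ring.
rewrite EA.
have qp : q - p != 0 by apply/eqP => E; apply: Nq; lra.
have Ea : 1 - a = (q - p) / (q * (1 - p)) by rewrite /a; field; snz.
rewrite Ea.
have ED : 1 - p / q * (1 - (q - p) / (q * (1 - p)) * Gs a B) =
   (q - p) / q * ((q + c * Gs a B) / q) by rewrite /c; field; snz.
rewrite ED.
have hG : 0 <= Gs a B by apply: Gs_ge0; rewrite -ct; apply: mulr_ge0 => //; exact: ltW.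
rewrite /c; field; snz.
Qed.

Theorem lemma1 (R : realFieldType) (p : R) (B : nat) :
  0 < p -> p < 1 -> (1 <= B)%N ->
  forall x y : R, 0 <= x -> x < y -> y <= 1 -> fB p B x < fB p B y.
Proof.
move=> p0 p1 B1 x y x0 xy y1.
have c0 : 0 < p / (1 - p) by rewrite divr_gt0 // subr_gt0.
have fE : forall q, 0 < q -> q <= 1 -> fB p B q =
   q * (hh (p / (1 - p)) B ((1 - q) / q) / (q + hh (p / (1 - p)) B ((1 - q) / q))).
  by move=> q q0 q1; rewrite /fB gt_eqF // rB_eq.
set c := p / (1 - p) in c0 fE.
case: B B1 fE => // n _ fE.
have y0 : 0 < y by lra.
rewrite (fE y) //.
set t2 := (1 - y) / y; set h2 := hh c n.+1 t2.
have t20 : 0 <= t2 by rewrite /t2 divr_ge0 // ?subr_ge0 // ltW.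
have h20 : 0 < h2 by apply: hh_gt0.
case: (eqVneq x 0) => [-> | xn0].
  rewrite /fB eqxx; apply: mulr_gt0 => //; apply: divr_gt0 => //; lra.
have x0' : 0 < x by rewrite lt_def xn0.
rewrite (fE x) //; last lra.
set t1 := (1 - x) / x; set h1 := hh c n.+1 t1.
have E : (t1 - t2) * (x * y) = y - x by rewrite /t1 /t2; field; apply/andP; split; apply: nz.
have t12 : t2 < t1.
  have : 0 < (t1 - t2) * (x * y) by rewrite E subr_gt0.
  rewrite pmulr_lgt0 ?mulr_gt0 //; lra.
have h10 : 0 < h1 by apply: hh_gt0; lra.
have K := @keys _ c n t1 t2 c0 t20 t12.
rewrite -/h1 -/h2 in K.
rewrite -subr_gt0.
have D : y * (h2 / (y + h2)) - x * (h1 / (x + h1)) =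
   (x * y * ((t1 - t2) * h1 * h2 - (h1 - h2))) / ((x + h1) * (y + h2)).
  have -> : x * y * ((t1 - t2) * h1 * h2 - (h1 - h2)) = (t1 - t2) * (x * y) * h1 * h2 - x * y * (h1 - h2) by ring.
  rewrite E; field; apply/andP; split; apply: nz; lra.
rewrite D; apply: divr_gt0; last by apply: mulr_gt0; lra.
apply: mulr_gt0; first exact: mulr_gt0.
lra.
Qed.
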